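(* Let $q$ be a prime power. The nilpotent graph $\Gamma_{\mathfrak{N}}(\mathfrak{t}(2,\mathbb{F}_q))$ has exactly $q+1$ connected components, and each of them is a complete graph $K_{q(q-1)}$.
   Context: $\mathfrak{t}(2,\mathbb{F}_q)$ is the Lie algebra of $2\times 2$ upper triangular matrices over $\mathbb{F}_q$ with bracket $[x,y]=xy-yx$. $\langle a,b\rangle$ denotes the Lie subalgebra generated by $a,b$, and $\mathrm{nil}(L)=\{x\in L\mid \langle h,x\rangle \text{ is nilpotent for all } h\in L\}$. For a finite-dimensional non-nilpotent Lie algebra $L$, the nilpotent graph $\Gamma_{\mathfrak{N}}(L)$ is the simple undirected graph with vertex set $L\setminus\mathrm{nil}(L)$ in which distinct vertices $x,y$ are adjacent iff $\langle x,y\rangle$ is nilpotent. *)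

(* Defs.v *)
From HB Require Import structures.
From mathcomp Require Import all_boot all_order all_algebra all_field.
From mathcomp Require Import boolp.
Set Implicit Arguments. Unset Strict Implicit. Unset Printing Implicit Defensive.
Import GRing.Theory.
Local Open Scope ring_scope.

Section TriangularLie.
Variable F : finFieldType.
Notation M := 'M[F]_2.

Definition lieb (x y : M) : M := x *m y - y *m x.

Definition t2 : {set M} := [set A : M | A ord_max ord0 == 0].

Definition lin_closed (A : {set M}) : bool :=
  (0 \in A) && [forall x in A, forall y in A, forall a : F, a *: x + y \in A].
Definition lie_closed (A : {set M}) : bool :=
  lin_closed A && [forall x in A, forall y in A, lieb x y \in A].

Definition span (S : {set M}) : {set M} :=
  \bigcap_(A | lin_closed A && (S \subset A)) A.
Definition lie_gen (S : {set M}) : {set M} :=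
  \bigcap_(A | lie_closed A && (S \subset A)) A.

Fixpoint lcs (A : {set M}) (k : nat) : {set M} :=
  match k with
  | 0 => A
  | k'.+1 => span [set lieb x y | x in A, y in lcs A k']
  end.

Definition lie_nilpotent (A : {set M}) : Prop :=
  exists k, lcs A k \subset [set 0].
Definition lie_nilpotentb (A : {set M}) : bool := `[< lie_nilpotent A >].

Definition nil_pair (a b : M) : bool := lie_nilpotentb (lie_gen [set a; b]).

Definition nilL : {set M} := [set x in t2 | [forall h in t2, nil_pair h x]].

Definition nil_vertices : {set M} := t2 :\: nilL.
Definition nil_adj : rel M := fun x y =>
  [&& x \in nil_vertices, y \in nil_vertices, x != y & nil_pair x y].

Definition nil_components : {set {set M}} :=
  [set [set y in nil_vertices | connect nil_adj x y] | x in nil_vertices].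

End TriangularLie.

(* Main.v *)
Require Import Defs.
From HB Require Import structures.
From mathcomp Require Import all_boot all_order all_algebra all_field.
From mathcomp Require Import boolp ring.
Set Implicit Arguments. Unset Strict Implicit. Unset Printing Implicit Defensive.
Import GRing.Theory.
Local Open Scope ring_scope.

Section Aux.
Variable F : finFieldType.
Notation M := 'M[F]_2.
Notation i0 := (@ord0 1).
Notation i1 := (@ord_max 1).

Lemma ord2 (i : 'I_2) : i = i0 \/ i = i1.
Proof. case: i => [[|[|//]] Hi]; [left|right]; exact/val_inj. Qed.

Lemma lift01 : lift (@ord0 1) (@ord0 0) = i1.
Proof. exact/val_inj. Qed.

Lemma mul2E (x y : M) i j : (x *m y) i j = x i i0 * y i0 j + x i i1 * y i1 j.
Proof. by rewrite mxE !big_ord_recl big_ord0 addr0 lift01. Qed.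

Definition dd (x : M) := x i0 i0 - x i1 i1.
Definition br (x y : M) := dd x * y i0 i1 - dd y * x i0 i1.
Definition E : M := delta_mx i0 i1.

Lemma t2P (x : M) : (x \in t2 F) = (x i1 i0 == 0).
Proof. by rewrite inE. Qed.

Lemma liebE (x y : M) : x \in t2 F -> y \in t2 F -> lieb x y = br x y *: E.
Proof.
rewrite !t2P => /eqP hx /eqP hy; apply/matrixP => i j.
rewrite /lieb /br /dd !mxE !big_ord_recl !big_ord0 !addr0 !lift01.
case: (ord2 i) => ->; case: (ord2 j) => -> /=; rewrite ?hx ?hy; ring.
Qed.

Lemma E_t2 : E \in t2 F.
Proof. by rewrite t2P mxE. Qed.

Lemma scaleE_eq0 (c : F) : (c *: E == 0) = (c == 0).
Proof.
apply/eqP/eqP => [h|->]; last by rewrite scale0r.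
by move/matrixP: h => /(_ i0 i1); rewrite !mxE /= mulr1.
Qed.

Lemma brZE (h : M) (c : F) : br h (c *: E) = dd h * c.
Proof. rewrite /br /dd !mxE /=; ring. Qed.


Lemma span_min (S B : {set M}) : lin_closed B -> S \subset B -> Defs.span S \subset B.
Proof. by move=> hB hS; apply: bigcap_inf; rewrite hB hS. Qed.

Lemma span_sup (S : {set M}) : S \subset Defs.span S.
Proof. by apply/subsetP => x xS; apply/bigcapP => A /andP[_ /subsetP]; apply. Qed.

Lemma gen_min (S B : {set M}) : lie_closed B -> S \subset B -> lie_gen S \subset B.
Proof. by move=> hB hS; apply: bigcap_inf; rewrite hB hS. Qed.

Lemma gen_sup (S : {set M}) : S \subset lie_gen S.
Proof. by apply/subsetP => x xS; apply/bigcapP => A /andP[_ /subsetP]; apply. Qed.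

Lemma gen_lieb (S : {set M}) x y : x \in lie_gen S -> y \in lie_gen S ->
  lieb x y \in lie_gen S.
Proof.
move=> /bigcapP hx /bigcapP hy; apply/bigcapP => A hA.
have xA := hx A hA; have yA := hy A hA.
case/andP: hA => /andP[_ /forall_inP H] _.
by have /forall_inP := H x xA; apply.
Qed.

Lemma det_trans (u1 u2 a1 a2 b1 b2 : F) : (u1 != 0) || (u2 != 0) ->
  u1 * a2 - a1 * u2 = 0 -> u1 * b2 - b1 * u2 = 0 -> a1 * b2 - b1 * a2 = 0.
Proof.
case/orP => hu ha hb.
  apply: (mulfI hu); rewrite mulr0.
  have -> : u1 * (a1 * b2 - b1 * a2) = a1 * (u1 * b2 - b1 * u2) - b1 * (u1 * a2 - a1 * u2) by ring.
  by rewrite ha hb !mulr0 subr0.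
apply: (mulfI hu); rewrite mulr0.
have -> : u2 * (a1 * b2 - b1 * a2) = a2 * (u1 * b2 - b1 * u2) - b2 * (u1 * a2 - a1 * u2) by ring.
by rewrite ha hb !mulr0 subr0.
Qed.

Definition Su (u1 u2 : F) : {set M} :=
  [set z in t2 F | u1 * z i0 i1 - dd z * u2 == 0].

Lemma Su_ab u1 u2 a b : (u1 != 0) || (u2 != 0) -> a \in Su u1 u2 -> b \in Su u1 u2 ->
  br a b = 0.
Proof.
rewrite !inE => hu /andP[_ /eqP ha] /andP[_ /eqP hb].
exact: (det_trans hu ha hb).
Qed.

Lemma Su_closed u1 u2 : (u1 != 0) || (u2 != 0) -> lie_closed (Su u1 u2).
Proof.
move=> hu; apply/andP; split.
  apply/andP; split.
    by rewrite !inE /dd !mxE subrr mulr0 mul0r subrr eqxx.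
  apply/forall_inP => x xS; apply/forall_inP => y yS; apply/forallP => a.
  move: xS yS; rewrite !inE /dd => /andP[/eqP x10 /eqP hx] /andP[/eqP y10 /eqP hy].
  rewrite !mxE x10 y10 mulr0 addr0 eqxx /=.
  apply/eqP; transitivity (a * (u1 * x i0 i1 - (x i0 i0 - x i1 i1) * u2) +
    (u1 * y i0 i1 - (y i0 i0 - y i1 i1) * u2)); first ring.
  by rewrite hx hy mulr0 addr0.
apply/forall_inP => x xS; apply/forall_inP => y yS.
have [xt yt] : x \in t2 F /\ y \in t2 F by move: xS yS; rewrite !inE => /andP[-> _] /andP[-> _].
rewrite liebE // (Su_ab hu xS yS) scale0r.
by rewrite !inE /dd !mxE subrr mulr0 mul0r subrr eqxx.
Qed.

Lemma t2_closed : lie_closed (t2 F).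
Proof.
apply/andP; split.
  apply/andP; split; first by rewrite t2P mxE.
  apply/forall_inP => x; rewrite t2P => /eqP hx; apply/forall_inP => y.
  by rewrite t2P => /eqP hy; apply/forallP => a; rewrite t2P !mxE hx hy mulr0 addr0.
apply/forall_inP => x xt; apply/forall_inP => y yt.
by rewrite liebE // t2P !mxE mulr0.
Qed.

Lemma nil_pairE x y : x \in t2 F -> y \in t2 F -> nil_pair x y = (br x y == 0).
Proof.
move=> xt yt; rewrite /nil_pair /lie_nilpotentb.
apply/asboolP/eqP => [[k hk]|hbr].
  apply/eqP; apply: contraT => hne.
  set L := lie_gen [set x; y].
  have xL : x \in L by apply: (subsetP (gen_sup _)); rewrite !inE eqxx.
  have yL : y \in L by apply: (subsetP (gen_sup _)); rewrite !inE eqxx orbT.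
  have Lt : L \subset t2 F.
    apply: gen_min; first exact: t2_closed.
    by apply/subsetP => z; rewrite in_set2 => /orP[/eqP->|/eqP->].
  have [h hL hd] : exists2 h, h \in L & dd h != 0.
    case: (eqVneq (dd x) 0) => hx; last by exists x.
    case: (eqVneq (dd y) 0) => hy; last by exists y.
    by move: hne; rewrite /br hx hy !mul0r subrr eqxx.
  have hinv : forall n, exists2 c : F, c != 0 & c *: E \in lcs L n.
    elim => [|n [c hc hcn]].
      by exists (br x y) => //=; rewrite -liebE //; apply: gen_lieb.
    exists (dd h * c); first by rewrite mulf_neq0.
    have cEt : c *: E \in t2 F by rewrite inE !mxE mulr0.
    rewrite /= -brZE -liebE //; last exact: (subsetP Lt).
    by apply: (subsetP (span_sup _)); apply: imset2_f.
    case: (hinv k) => c hc /(subsetP hk); rewrite inE scaleE_eq0.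
  by rewrite (negbTE hc).
have [u1 [u2 [hu hxS hyS]]] : exists u1 u2,
    [/\ (u1 != 0) || (u2 != 0), x \in Su u1 u2 & y \in Su u1 u2].
  case: (boolP ((dd x != 0) || (x i0 i1 != 0))) => hx.
    exists (dd x), (x i0 i1); split => //; rewrite inE ?xt ?yt /=.
      by rewrite mulrC subrr.
    by move: hbr; rewrite /br => ->.
  move: hx; rewrite negb_or !negbK => /andP[/eqP hx1 /eqP hx2].
  case: (boolP ((dd y != 0) || (y i0 i1 != 0))) => hy.
    exists (dd y), (y i0 i1); split => //; rewrite inE ?xt ?yt /=.
      by rewrite hx1 hx2 mulr0 mul0r subrr.
    by rewrite mulrC subrr.
  move: hy; rewrite negb_or !negbK => /andP[/eqP hy1 /eqP hy2].
  exists 1, 0; split; first by rewrite oner_eq0.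
    by rewrite inE xt hx2 !mulr0 subrr eqxx.
  by rewrite inE yt hy2 !mulr0 subrr eqxx.
have LS : lie_gen [set x; y] \subset Su u1 u2.
  apply: gen_min; first exact: Su_closed.
  by apply/subsetP => z; rewrite in_set2 => /orP[/eqP->|/eqP->].
exists 1%N => /=; apply: span_min.
  apply/andP; split; first by rewrite inE.
  apply/forall_inP => a; rewrite inE => /eqP->; apply/forall_inP => b.
  by rewrite inE => /eqP->; apply/forallP => c; rewrite inE scaler0 addr0.
apply/subsetP => z /imset2P[a b aL bL ->].
have aS := subsetP LS a aL; have bS := subsetP LS b bL.
have [ta tb] : a \in t2 F /\ b \in t2 F by move: aS bS; rewrite !inE => /andP[-> _] /andP[-> _].
by rewrite inE liebE // (Su_ab hu aS bS) scale0r.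
Qed.


Definition nz (x : M) := (dd x != 0) || (x i0 i1 != 0).

Lemma br_trans w a b : nz w -> br w a = 0 -> br w b = 0 -> br a b = 0.
Proof. exact: det_trans. Qed.

Lemma br_anti a b : br b a = - br a b.
Proof. rewrite /br; ring. Qed.

Lemma br_refl a : br a a = 0.
Proof. rewrite /br; ring. Qed.

Lemma vertP x : (x \in nil_vertices F) = (x \in t2 F) && nz x.
Proof.
rewrite /nil_vertices /nilL in_setD inE.
case xt: (x \in t2 F); rewrite ?andbF //= andbT.
apply/idP/idP.
  apply: contraR; rewrite /nz negb_or !negbK => /andP[/eqP h1 /eqP h2].
  apply/forall_inP => h ht; rewrite nil_pairE // /br h1 h2; apply/eqP; ring.
move=> hx; apply/negP => /forall_inP H.
case/orP: hx => hx.
  case: (eqVneq (x i0 i1) 0) => hx2.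
    have := H E E_t2; rewrite nil_pairE ?E_t2 // /br /dd !mxE /=.
    move/eqP => h; move/eqP: hx; apply.
    by rewrite /dd; transitivity (- ((0 - 0) * x i0 i1 - (x i0 i0 - x i1 i1) * 1)); [ring|rewrite h oppr0].
  have ht : (delta_mx i0 i0 : M) \in t2 F by rewrite t2P mxE.
  have := H _ ht; rewrite nil_pairE // /br /dd !mxE /=.
  move/eqP => h; move/eqP: hx2; apply.
  by transitivity ((1 - 0) * x i0 i1 - (x i0 i0 - x i1 i1) * 0); [ring|rewrite h].
have ht : (delta_mx i0 i0 : M) \in t2 F by rewrite t2P mxE.
have := H _ ht; rewrite nil_pairE // /br /dd !mxE /=.
move/eqP => h; move/eqP: hx; apply.
by transitivity ((1 - 0) * x i0 i1 - (x i0 i0 - x i1 i1) * 0); [ring|rewrite h].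
Qed.


Lemma adjE x y : nil_adj x y =
  [&& x \in nil_vertices F, y \in nil_vertices F, x != y & br x y == 0].
Proof.
rewrite /nil_adj; case xV: (x \in nil_vertices F) => //=.
case yV: (y \in nil_vertices F) => //=.
move: xV yV; rewrite !vertP => /andP[xt _] /andP[yt _].
by rewrite nil_pairE.
Qed.

Lemma connectE x y : x \in nil_vertices F -> y \in nil_vertices F ->
  connect (@nil_adj F) x y = (br x y == 0).
Proof.
move=> xV yV; apply/idP/idP.
  pose a := [pred z | (z \in nil_vertices F) && (br x z == 0)].
  have cl : closed (@nil_adj F) a.
    move=> u v; rewrite adjE => /and4P[uV vV _ /eqP huv].
    have nzu : nz u by move: uV; rewrite vertP => /andP[].
    rewrite -!topredE /= uV vV /=; apply/eqP/eqP => h.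
      by apply: (br_trans nzu) huv; rewrite br_anti h oppr0.
    have nzv : nz v by move: vV; rewrite vertP => /andP[].
    by apply: (br_trans nzv); rewrite br_anti ?h ?huv oppr0.
  move=> hc; have := closed_connect cl hc.
  by rewrite -!topredE /= xV yV br_refl eqxx /= => <-.
move=> h; case: (eqVneq x y) => [->|hne]; first exact: connect0.
by apply: connect1; rewrite adjE xV yV hne.
Qed.

Definition Cx (x : M) := [set y in nil_vertices F | br x y == 0].

Lemma compE x : x \in nil_vertices F ->
  [set y in nil_vertices F | connect (@nil_adj F) x y] = Cx x.
Proof.
move=> xV; apply/setP => y; rewrite in_set [in RHS]in_set.
case yV: (y \in nil_vertices F) => //=; exact: connectE.
Qed.

Lemma Cx_complete z x y : z \in nil_vertices F -> x \in Cx z -> y \in Cx z ->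
  x != y -> nil_adj x y.
Proof.
move=> zV /setIdP[xV /eqP hx] /setIdP[yV /eqP hy] hne.
rewrite adjE xV yV hne /=; apply/eqP.
have nzz : nz z by move: zV; rewrite vertP => /andP[].
exact: (br_trans nzz hx hy).
Qed.


Lemma prop_vec (u1 u2 a1 a2 : F) : (u1 != 0) || (u2 != 0) ->
  u1 * a2 - a1 * u2 = 0 -> exists c, a1 = c * u1 /\ a2 = c * u2.
Proof.
case/orP => hu h.
  exists (a1 / u1); split; first by field.
  have e : a2 = (u1 * a2) / u1 by field.
  have e2 : u1 * a2 = a1 * u2 by apply/eqP; rewrite -subr_eq0 h.
  by rewrite e e2; field.
exists (a2 / u2); split; last by field.
have e : a1 = (a1 * u2) / u2 by field.
have e2 : u1 * a2 = a1 * u2 by apply/eqP; rewrite -subr_eq0 h.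
by rewrite e -e2; field.
Qed.

Definition fm (x : M) (p : F * F) : M := \matrix_(i, j)
  if i == i0 then (if j == i0 then p.2 * dd x + p.1 else p.2 * x i0 i1)
  else (if j == i0 then 0 else p.1).

Lemma fmE x p : [/\ fm x p i0 i0 = p.2 * dd x + p.1, fm x p i0 i1 = p.2 * x i0 i1,
  fm x p i1 i0 = 0 & fm x p i1 i1 = p.1].
Proof. by rewrite !mxE. Qed.

Lemma card_Cx x : x \in nil_vertices F -> #|Cx x| = (#|F| * (#|F| - 1))%N.
Proof.
move=> xV; have nzx : nz x by move: xV; rewrite vertP => /andP[].
have -> : Cx x = fm x @: setX [set: F] [set~ 0].
  apply/setP => y; apply/setIdP/imsetP.
    move=> [yV /eqP hy].
    have /andP[yt nzy] : (y \in t2 F) && nz y by rewrite -vertP.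
    have [c [h1 h2]] := prop_vec nzx hy.
    exists (y i1 i1, c).
      rewrite !inE /=; apply: contraTneq nzy => c0.
      by rewrite /nz h1 h2 c0 !mul0r eqxx.
    apply/matrixP => i j; have [e00 e01 e10 e11] := fmE x (y i1 i1, c).
    case: (ord2 i) => ->; case: (ord2 j) => ->; rewrite ?e00 ?e01 ?e10 ?e11 //=.
      by rewrite -h1 /dd subrK.
    by apply/eqP; rewrite -t2P.
  move=> [[t c]] /setXP[_]; rewrite in_setC1 => hc ->.
  have [e00 e01 e10 e11] := fmE x (t, c).
  have ddf : dd (fm x (t, c)) = c * dd x by rewrite /dd e00 e11 /= addrK.
  split.
    rewrite vertP t2P e10 eqxx /= /nz ddf e01 /=.
    by case/orP: nzx => h; apply/orP; [left|right]; exact: mulf_neq0.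
  by rewrite /br ddf e01 /=; apply/eqP; ring.
rewrite card_in_imset ?cardsX ?cardsT ?cardsC1 ?subn1 //.
move=> [t c] [t' c']; rewrite !inE /= => hc hc' e.
have [e00 e01 e10 e11] := fmE x (t, c).
have [f00 f01 f10 f11] := fmE x (t', c').
have et : t = t' by move: e11; rewrite e f11 /= => ->.
subst t'.
have h1 : c' * dd x = c * dd x by move: e00; rewrite e f00 /= => /addIr.
have h2 : c' * x i0 i1 = c * x i0 i1 by move: e01; rewrite e f01 /=.
congr (_, _).
by case/orP: nzx => h; [exact: (mulIf h) | exact: (mulIf h)].
Qed.


Definition rr (o : option F) : M :=
  if o is Some s then delta_mx i0 i0 + s *: E else E.

Lemma rrE o : [/\ rr o \in t2 F, dd (rr o) = (if o is Some _ then 1 else 0) &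
  rr o i0 i1 = (if o is Some s then s else 1)].
Proof. by case: o => [s|]; rewrite /rr t2P /dd !mxE /= ?mulr0 ?mulr1 ?add0r ?addr0 ?subr0 ?subrr ?eqxx ?oppr0. Qed.

Lemma rrV o : rr o \in nil_vertices F.
Proof.
have [ht hd h01] := rrE o; rewrite vertP ht /nz hd h01.
by case: o {ht hd h01} => [s|] /=; rewrite ?oner_eq0 ?eqxx /=.
Qed.

Lemma Cx_eq x y : x \in nil_vertices F -> y \in nil_vertices F -> br x y = 0 ->
  Cx x = Cx y.
Proof.
move=> xV yV h.
have nzx : nz x by move: xV; rewrite vertP => /andP[].
have nzy : nz y by move: yV; rewrite vertP => /andP[].
apply/setP => z; rewrite !in_set; congr (_ && _); apply/eqP/eqP => hz.
  by apply: (br_trans nzx) hz.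
by apply: (br_trans nzy) hz; rewrite br_anti h oppr0.
Qed.

Lemma Cx_rr_inj : injective (fun o => Cx (rr o)).
Proof.
move=> o o' /= e.
have : rr o' \in Cx (rr o) by rewrite e inE rrV br_refl eqxx.
rewrite inE rrV /= /br.
have [_ hd h01] := rrE o; have [_ hd' h01'] := rrE o'.
rewrite hd hd' h01 h01'.
case: o o' {e hd h01 hd' h01'} => [s|] [s'|] //=.
- by rewrite !mul1r subr_eq0 => /eqP->.
- by rewrite mul1r mul0r subr0 oner_eq0.
- by rewrite mul0r mul1r sub0r oppr_eq0 oner_eq0.
Qed.

End Aux.

Theorem theorem4p6 (F : finFieldType) :
  #|nil_components F| = #|F|.+1 /\
  (forall C, C \in nil_components F ->
     #|C| = (#|F| * (#|F| - 1))%N /\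
     (forall x y, x \in C -> y \in C -> x != y -> nil_adj x y)).
Proof.
have H1 : nil_components F = (@Cx F) @: nil_vertices F.
  by apply: eq_in_imset => x xV; exact: compE.
split.
  have H2 : (@Cx F) @: nil_vertices F = (fun o => Cx (@rr F o)) @: [set: option F].
    apply/setP => S; apply/imsetP/imsetP => [[x xV ->]|[o _ ->]]; last first.
      by exists (rr o) => //; exact: rrV.
    have nzx : nz x by move: xV; rewrite vertP => /andP[].
    exists (if dd x != 0 then Some (x ord0 ord_max / dd x) else None) => //.
    apply: Cx_eq => //; first exact: rrV.
    have [_ hd h01] := rrE (if dd x != 0 then Some (x ord0 ord_max / dd x) else None).
    rewrite /br hd h01; case: (eqVneq (dd x) 0) => h /=.
      by rewrite h !mul0r subrr.
    by rewrite mul1r; field.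
  by rewrite H1 H2 card_imset ?cardsT ?card_option //; exact: Cx_rr_inj.
move=> C; rewrite H1 => /imsetP[z zV ->]; split; first exact: card_Cx.
by move=> x y; apply: Cx_complete.
Qed.
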